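(* Assume that the pair $(C,A)$ is observable and that $0$ is in the interior of $\mathcal{K}_1$. Let $T>0$. Then there exist $R>0$ with $B(0,R)\subset\mathcal{K}_1$ and $\eta_1>0$ such that the following holds. Let $\delta\in C^\infty(\mathbb{R}^n,\mathbb{R})$ satisfy $\delta(0)=0$ and $\sup_{x\in\mathcal{K}_1}|\delta(x)|<\eta_1$, and let $(\hat x,\varepsilon,\xi,\omega)$ be the solution of $(\mathrm{CS}_\delta)$ with initial condition $(\hat x_0,\varepsilon_0,\xi_0,\omega_0)\in B(0,R)\times\mathbb{R}^n\times\mathcal{S}\times\mathbb{S}^{n-1}$. If $\hat x(t)\in B(0,R)$ for all $t\in[0,T]$, then the input $u:t\mapsto(\lambda+\delta)(\hat x(t))$ makes the system $\dot x=A_{u(t)}x+bu(t)$, $y=Cx$ observable in time $T$.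
   Context: Let $n\ge1$, $A,B\in\mathrm{End}(\mathbb{R}^n)$, $C\in\mathcal{L}(\mathbb{R}^n,\mathbb{R})$, $b\in\mathbb{R}^n$, $A_u=A+uB$. $(C,A)$ is observable if the matrix with rows $C,CA,\dots,CA^{n-1}$ has rank $n$. An input $u$ makes the system $\dot x=A_{u(t)}x+bu(t)$, $y=Cx$ observable in time $T$ if any two solutions with equal outputs on $[0,T]$ coincide on $[0,T]$. Let $\lambda\in C^\infty(\mathbb{R}^n,\mathbb{R})$, $\lambda(0)=0$, be such that $0$ is an asymptotically stable equilibrium of $x\mapsto A_{\lambda(x)}x+b\lambda(x)$ with open domain of attraction $D(\lambda)$. Let $\mathcal{S}$ be a finite-dimensional manifold, $L:\mathcal{S}\to\mathcal{L}(\mathbb{R},\mathbb{R}^n)$, $f(\cdot,u)$ a vector field on $\mathcal{S}$ for each $u\in\mathbb{R}$. For $\delta\in C^\infty(\mathbb{R}^n,\mathbb{R})$, $(\mathrm{CS}_\delta)$ is: $\dot{\hat x}=A_{(\lambda+\delta)(\hat x)}\hat x+b(\lambda+\delta)(\hat x)-L(\xi)C\varepsilon$, $\dot\varepsilon=(A_{(\lambda+\delta)(\hat x)}-L(\xi)C)\varepsilon$, $\dot\xi=f(\xi,(\lambda+\delta)(\hat x))$, $\dot\omega=A_{(\lambda+\delta)(\hat x)}\omega$. $\mathcal{K}=\mathcal{K}_1\times\mathcal{K}_2\times\mathcal{K}_3$ is a semi-algebraic compact subset of $D(\lambda)\times\mathbb{R}^n\times\mathcal{S}$. *)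

(* Defs.v *)
From HB Require Import structures.
From mathcomp Require Import all_boot all_order all_algebra.
From mathcomp Require Import all_classical all_reals all_analysis.
Set Implicit Arguments. Unset Strict Implicit. Unset Printing Implicit Defensive.
Import Order.TTheory GRing.Theory Num.Theory.
Import numFieldNormedType.Exports.
Local Open Scope classical_set_scope.
Local Open Scope ring_scope.

Section Defs.
Variable R : realType.

Definition enorm n (x : 'cV[R]_n) : R := Num.sqrt (\sum_(i < n) (x i 0) ^+ 2).
Definition eball n (r : R) : set 'cV[R]_n := [set x | enorm x < r].
Definition sphere n : set 'cV[R]_n := [set x | enorm x = 1].

Fixpoint iterD n (vs : seq 'cV[R]_n) (g : 'cV[R]_n -> R) : 'cV[R]_n -> R :=
  match vs with
  | [::] => g
  | v :: vs' => fun x => derive (iterD vs' g) x v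
  end.
Definition smooth n (g : 'cV[R]_n -> R) : Prop :=
  forall vs : seq 'cV[R]_n,
    continuous (iterD vs g) /\ forall v x, derivable (iterD vs g) x v.

Definition Au n (A B : 'M[R]_n) (u : R) : 'M[R]_n := A + u *: B.

Definition observable_pair n (C : 'rV[R]_n) (A : 'M[R]_n) : Prop :=
  \rank (\matrix_(i < n, j < n) (C *m A ^+ i) 0 j) = n.

Definition closed_loop n (A B : 'M[R]_n) (b : 'cV[R]_n) (lam : 'cV[R]_n -> R)
  (x : 'cV[R]_n) : 'cV[R]_n := Au A B (lam x) *m x + lam x *: b.

Definition fwd_sol n (F : 'cV[R]_n -> 'cV[R]_n) (x : R -> 'cV[R]_n) : Prop :=
  {within [set t | 0 <= t], continuous x} /\
  forall t, 0 < t -> derivable x t 1 /\ derive x t 1 = F (x t).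

Definition asymp_stable n (F : 'cV[R]_n -> 'cV[R]_n) : Prop :=
  F 0 = 0 /\
  (forall eps, 0 < eps -> exists2 d, 0 < d &
     forall x0, enorm x0 < d ->
       (exists x, fwd_sol F x /\ x 0 = x0) /\
       forall x, fwd_sol F x -> x 0 = x0 -> forall t, 0 <= t -> enorm (x t) < eps) /\
  (exists2 r, 0 < r &
     forall x, fwd_sol F x -> enorm (x 0) < r -> x t @[t --> +oo] --> (0 : 'cV[R]_n)).

Definition dom_attraction n (F : 'cV[R]_n -> 'cV[R]_n) : set 'cV[R]_n :=
  [set x0 | exists x, [/\ fwd_sol F x, x 0 = x0 & x t @[t --> +oo] --> (0 : 'cV[R]_n)]].

Inductive polyfun n : ('cV[R]_n -> R) -> Prop :=
  | pf_const (c : R) : polyfun (fun _ => c)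
  | pf_coord (i : 'I_n) : polyfun (fun x => x i 0)
  | pf_add p q : polyfun p -> polyfun q -> polyfun (fun x => p x + q x)
  | pf_mul p q : polyfun p -> polyfun q -> polyfun (fun x => p x * q x).

Definition semialgebraic n (K : set 'cV[R]_n) : Prop :=
  exists (N : nat) (p : nat -> 'cV[R]_n -> R) (M : nat -> nat)
         (q : nat -> nat -> 'cV[R]_n -> R),
    (forall i, polyfun (p i)) /\ (forall i j, polyfun (q i j)) /\
    K = [set x | exists i, [/\ (i < N)%N, p i x = 0 &
                           forall j, (j < M i)%N -> 0 < q i j x]].

Definition sys_sol n (A B : 'M[R]_n) (b : 'cV[R]_n) (u : R -> R) (T : R)
  (x : R -> 'cV[R]_n) : Prop :=
  {within `[0, T], continuous x} /\
  forall t, 0 < t < T ->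
    derivable x t 1 /\ derive x t 1 = Au A B (u t) *m x t + u t *: b.

Definition observable_in_time n (A B : 'M[R]_n) (b : 'cV[R]_n) (C : 'rV[R]_n)
  (u : R -> R) (T : R) : Prop :=
  forall x1 x2, sys_sol A B b u T x1 -> sys_sol A B b u T x2 ->
    (forall t, 0 <= t <= T -> C *m x1 t = C *m x2 t) ->
    forall t, 0 <= t <= T -> x1 t = x2 t.

(* solution on [0,T] of (CS_delta); S is a subset of R^m (the manifold,
   embedded), L : S -> L(R,R^n) ~ R^n, f : S x R -> R^m *)
Definition CS_sol n m (A B : 'M[R]_n) (b : 'cV[R]_n) (C : 'rV[R]_n)
  (lam delta : 'cV[R]_n -> R) (S : set 'cV[R]_m)
  (L : 'cV[R]_m -> 'cV[R]_n) (f : 'cV[R]_m -> R -> 'cV[R]_m) (T : R)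
  (xh eps : R -> 'cV[R]_n) (xi : R -> 'cV[R]_m) (om : R -> 'cV[R]_n) : Prop :=
  let u t := lam (xh t) + delta (xh t) in
  [/\ {within `[0, T], continuous xh} /\ {within `[0, T], continuous eps},
      {within `[0, T], continuous xi} /\ {within `[0, T], continuous om},
      (forall t, 0 <= t <= T -> S (xi t)) &
      forall t, 0 < t < T ->
       [/\ derivable xh t 1 /\
             derive xh t 1 = Au A B (u t) *m xh t + u t *: b - L (xi t) *m (C *m eps t),
           derivable eps t 1 /\
             derive eps t 1 = (Au A B (u t) - L (xi t) *m C) *m eps t,
           derivable xi t 1 /\ derive xi t 1 = f (xi t) (u t) &
           derivable om t 1 /\ derive om t 1 = Au A B (u t) *m om t]].

End Defs.

(* Main.v *)
Require Import Defs.
From HB Require Import structures.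
From mathcomp Require Import all_boot all_order all_algebra.
From mathcomp Require Import all_classical all_reals all_analysis.
From mathcomp Require Import zify ring lra.
Import Order.TTheory GRing.Theory Num.Theory.
Import numFieldNormedType.Exports.
Local Open Scope classical_set_scope.
Local Open Scope ring_scope.
Set Implicit Arguments. Unset Strict Implicit. Unset Printing Implicit Defensive.
Section S.
Variable R : realType.
Lemma coord_le_norm m n (v : 'M[R]_(m, n)) i j : `|v i j| <= `|v|.
Proof.
rewrite [leRHS]/Num.Def.normr/= mx_normrE.
by apply: le_trans; last exact: (le_bigmax _ _ (i, j)).
Qed.
Lemma norm_le_coord m n (v : 'M[R]_(m, n)) b : 0 <= b ->
  (forall i j, `|v i j| <= b) -> `|v| <= b.
Proof.
move=> b0 H; rewrite /Num.Def.normr/= mx_normrE (bigmax_le _ b0)//= => -[i j] _; exact: H.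

Qed.
Lemma is_derive_lin n (X : 'rV[R]_n) (e : R -> 'cV[R]_n) t :
  derivable e t 1 ->
  is_derive t 1 (fun s => (X *m e s) 0 0) ((X *m 'D_1 e t) 0 0).
Proof.
move=> de.
have hc j : derivable (fun s => e s j 0) t 1 := (derivable_mxP _ _ _).1 de j 0.
have -> : (fun s => (X *m e s) 0 0) = \sum_(j < n) (fun s => X 0 j *: e s j 0).
  apply/funext => s; rewrite fct_sumE. by rewrite mxE.
rewrite (derive_mx de) !mxE.
rewrite (eq_bigr (fun j => X 0 j *: 'D_1 (fun s => e s j 0) t)); last first.
  by move=> j _; rewrite mxE.
apply: is_derive_sum => j.
have := derivableP (hc j).
move=> H; exact: is_deriveZ.
Qed.

Lemma lin_continuous n (X : 'rV[R]_n) : continuous (fun v : 'cV[R]_n => (X *m v) 0 0).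
Proof.
have -> : (fun v : 'cV[R]_n => (X *m v) 0 0) = \sum_(j < n) (fun v : 'cV[R]_n => X 0 j * v j 0).
  by apply/funext => v; rewrite fct_sumE mxE.
elim/big_ind: _.
- by move=> x; exact: cst_continuous.
- move=> f g cf cg x. apply: continuousD; [exact: cf| exact: cg].
- move=> j _ x; apply: continuousM; first exact: cst_continuous.
  exact: coord_continuous.
Qed.

Definition rs n (X : 'rV[R]_n) : R := \sum_j `|X 0 j|.
Lemma rs_ge0 n (X : 'rV[R]_n) : 0 <= rs X.
Proof. by apply: sumr_ge0 => j _. Qed.
Lemma rs_bound n (X : 'rV[R]_n) (v : 'cV[R]_n) : `|(X *m v) 0 0| <= rs X * `|v|.
Proof.
rewrite mxE /rs mulr_suml; apply: le_trans (ler_norm_sum _ _ _) _.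
apply: ler_sum => j _; rewrite normrM ler_wpM2l //; exact: coord_le_norm.
Qed.

Lemma lip (f df : R -> R) (a b L : R) :
  (forall x, x \in `]a, b[ -> is_derive x 1 f (df x)) ->
  {within `[a, b], continuous f} ->
  (forall x, x \in `]a, b[ -> `|df x| <= L) ->
  forall p q, p \in `[a, b] -> q \in `[a, b] -> `|f p - f q| <= L * `|p - q|.
Proof.
move=> fd fc fL.
suff H : forall p q, p \in `[a, b] -> q \in `[a, b] -> p <= q ->
    `|f p - f q| <= L * `|p - q|.
  move=> p q hp hq; have [pq|qp] := leP p q; first exact: H.
  rewrite distrC (distrC p). apply: H hq hp _. exact: ltW.
move=> p q hp hq; rewrite le_eqVlt => /predU1P[->|pq].
  by rewrite !subrr normr0 mulr0.
move: hp hq; rewrite !in_itv /= => /andP[ap pb] /andP[aq qb].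
have H1 : forall x, x \in `]p, q[ -> is_derive x 1 f (df x).
  move=> x; rewrite in_itv /= => /andP[px xq]; apply: fd.
  by rewrite in_itv /= (le_lt_trans ap px) (lt_le_trans xq qb).
have H2 : {within `[p, q], continuous f}.
  apply: (continuous_subspaceW _ fc); apply: subset_itv; by rewrite bnd_simp.
have [x hx e] := MVT pq H1 H2.
rewrite distrC e distrC normrM.
rewrite ler_wpM2r //; apply: fL.
move: hx; rewrite !in_itv /= => /andP[px xq].
by rewrite (le_lt_trans ap px) (lt_le_trans xq qb).
Qed.

Lemma entryD m n (X Y : 'M[R]_(m, n)) i j : (X + Y) i j = X i j + Y i j.
Proof. by rewrite mxE. Qed.
Lemma entryZ m n a (X : 'M[R]_(m, n)) i j : (a *: X) i j = a * X i j.
Proof. by rewrite mxE. Qed.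

Fixpoint tau (T c K : R) (j : nat) : R :=
  if j is j'.+1 then
    Num.min (tau T c K j') (tau T c K j' * Num.min T (tau T c K j' / (6 * c)) / 6)
  else (2 * K)^-1.

Lemma tau_gt0 T c K : 0 < T -> 0 < c -> 0 < K -> forall j, 0 < tau T c K j.
Proof.
move=> T0 c0 K0; elim=> [|j IH] /=; first by rewrite invr_gt0 mulr_gt0.
rewrite lt_min IH /= divr_gt0 // mulr_gt0 // lt_min T0 /= divr_gt0 //.
by rewrite mulr_gt0.
Qed.

Lemma tau_decr T c K i j : (i <= j)%N -> tau T c K j <= tau T c K i.
Proof.
elim: j => [|j IH]; first by rewrite leqn0 => /eqP ->.
rewrite leq_eqVlt => /orP[/eqP ->//|]; rewrite ltnS => /IH.
apply: le_trans => /=; by rewrite ge_min lexx.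
Qed.


Lemma ar1 (Y U W c M e : R) : `|Y| <= c * M -> `|U| <= e -> e <= 1 ->
  `|W| <= c * M -> 0 <= c * M -> `|Y| + `|U| * `|W| <= 2 * c * M.
Proof.
move=> hY hU e1 hW cM.
have : `|U| * `|W| <= 1 * (c * M).
  by apply: ler_pM => //; apply: le_trans hU e1.
lra.
Qed.
Lemma ar2 (d tj h M : R) : 0 < h -> 0 <= M -> d <= tj * h / 6 ->
  2 * d * M / h <= tj * M / 3.
Proof. move=> h0 M0 hd; rewrite ler_pdivrMr //; nra. Qed.
Lemma ar3 (c M x h tj : R) : 0 < c -> 0 <= M -> 0 <= x -> x <= h ->
  h * (6 * c) <= tj -> 2 * c * M * x <= tj * M / 3.
Proof.
move=> c0 M0 x0 xh htj.
have h1 : c * M * x <= c * M * h by rewrite ler_wpM2l // mulr_ge0 // ltW.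
have h2 : h * (6 * c) * M <= tj * M by rewrite ler_wpM2r.
nra.
Qed.
Lemma ar4 (e c M tj : R) : 0 <= M -> e * c <= tj / 3 -> e * (c * M) <= tj * M / 3.
Proof. move=> *; nra. Qed.

Lemma core n (A B : 'M[R]_n) (C : 'rV[R]_n) (T : R) :
  0 < T -> observable_pair C A ->
  exists2 eps : R, 0 < eps & forall (u : R -> R) (e : R -> 'cV[R]_n),
   (forall t, 0 <= t <= T -> `|u t| <= eps) ->
   {within `[0, T], continuous e} ->
   (forall t, 0 < t < T -> derivable e t 1 /\ 'D_1 e t = Au A B (u t) *m e t) ->
   (forall t, 0 <= t <= T -> C *m e t = 0) ->
   forall t, 0 <= t <= T -> e t = 0.
Proof.
move=> T0 obs.
pose O := \matrix_(i < n, j < n) (C *m A ^+ i) 0 j.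
have Ou : O \in unitmx by rewrite -row_free_unit /row_free; apply/eqP; exact: obs.
pose Oi := invmx O.
pose K := 1 + \sum_i \sum_k `|Oi i k|.
pose c := 1 + \sum_(k < n.+2) (rs (C *m A ^+ k) + rs (C *m A ^+ k *m B)).
have K1 : 1 <= K by rewrite lerDl; apply: sumr_ge0 => i _; apply: sumr_ge0.
have c1 : 1 <= c.
  by rewrite lerDl; apply: sumr_ge0 => i _; rewrite addr_ge0 // rs_ge0.
have K0 : 0 < K by apply: lt_le_trans K1.
have c0 : 0 < c by apply: lt_le_trans c1.
have hc k : (k < n.+2)%N -> rs (C *m A ^+ k) <= c /\ rs (C *m A ^+ k *m B) <= c.
  move=> hk.
  pose F := fun k : 'I_n.+2 => rs (C *m A ^+ k) + rs (C *m A ^+ k *m B).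
  have : F (Ordinal hk) <= \sum_k F k.
    rewrite (bigD1 (Ordinal hk)) //= lerDl; apply: sumr_ge0 => i _.
    by rewrite addr_ge0 // rs_ge0.
  rewrite /F /=; have := rs_ge0 (C *m A ^+ k); have := rs_ge0 (C *m A ^+ k *m B).
  rewrite /c; move=> ? ? ?; split; lra.
pose tt := tau T c K.
have tt0 j : 0 < tt j by apply: tau_gt0.
pose eps := Num.min 1 (tt n / (3 * c)).
exists eps; first by rewrite lt_min ltr01 /= divr_gt0 // mulr_gt0.
move=> u e hu ce de Ce.
have eps1 : eps <= 1 by rewrite ge_min lexx.
have eps0 : 0 <= eps by rewrite le_min ler01 /= divr_ge0 // ?mulr_ge0 // ltW.
have epsc : eps * c <= tt n / 3.
  have : eps <= tt n / (3 * c) by rewrite ge_min lexx orbT.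
  rewrite ler_pdivlMr ?mulr_gt0 //; lra.
have cn : {within `[0, T], continuous (fun t => `|e t|)}.
  move=> x; exact: (continuous_comp (ce x) (@norm_continuous _ _ (e x))).
have [tm tmT hM] := EVT_max (ltW T0) cn.
pose M := `|e tm|.
have M0 : 0 <= M by exact: normr_ge0.
have hM' t : 0 <= t <= T -> `|e t| <= M.
  by move=> ht; apply: hM; rewrite in_itv /=.
pose y j s := (C *m A ^+ j *m e s) 0 0.
pose w j s := (C *m A ^+ j *m B *m e s) 0 0.
have hy j s : (j < n.+2)%N -> 0 <= s <= T -> `|y j s| <= c * M.
  move=> hj hs; apply: le_trans (rs_bound _ _) _.
  by apply: ler_pM => //; [exact: rs_ge0 | case: (hc j hj) | exact: hM'].
have hw j s : (j < n.+2)%N -> 0 <= s <= T -> `|w j s| <= c * M.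
  move=> hj hs; apply: le_trans (rs_bound _ _) _.
  by apply: ler_pM => //; [exact: rs_ge0 | case: (hc j hj) | exact: hM'].
have dy j s : 0 < s < T -> is_derive s 1 (y j) (y j.+1 s + u s * w j s).
  move=> hs; case: (de s hs) => ds De.
  have := is_derive_lin (C *m A ^+ j) ds; rewrite De.
  have -> : C *m A ^+ j *m (Au A B (u s) *m e s) =
      C *m A ^+ j.+1 *m e s + u s *: (C *m A ^+ j *m B *m e s).
    rewrite /Au mulmxA mulmxDr mulmxDl -scalemxAr -scalemxAl.
    by rewrite exprSr -mulmxE mulmxA.
  by rewrite entryD entryZ.
have cy j : {within `[0, T], continuous (y j)}.
  move=> x; exact: (continuous_comp (ce x) (@lin_continuous _ (C *m A ^+ j) (e x))).
have main k : (k < n)%N -> forall t, 0 <= t <= T -> `|y k t| <= tt (n.-1 - k)%N * M.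
  elim: k => [|k IH] hk t ht.
    rewrite /y expr0 mulmx1 Ce // mxE normr0.
    by apply: mulr_ge0 => //; exact: ltW.
  pose j := (n.-1 - k.+1)%N.
  have ej : (n.-1 - k)%N = j.+1 by rewrite /j; clear -hk; lia.
  have hk1 : (k < n)%N by clear -hk; lia.
  have hk2 : (k.+2 < n.+2)%N by clear -hk; lia.
  have hk3 : (k.+1 < n.+2)%N by clear -hk; lia.
  have hjn : (j <= n)%N by rewrite /j; clear -hk; lia.
  have IH' s : 0 <= s <= T -> `|y k s| <= tt j.+1 * M.
    by move=> hs; rewrite -ej; apply: IH.
  pose tj := tt j.
  have tj0 : 0 < tj by exact: tt0.
  pose h := Num.min T (tj / (6 * c)).
  have h0 : 0 < h by rewrite lt_min T0 /= divr_gt0 // mulr_gt0.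
  have hT : h <= T by rewrite ge_min lexx.
  have htj : h * (6 * c) <= tj.
    have : h <= tj / (6 * c) by rewrite ge_min lexx orbT.
    by rewrite ler_pdivlMr ?mulr_gt0.
  have del : tt j.+1 <= tj * h / 6 by rewrite /tt /= ge_min lexx orbT.
  have del0 : 0 <= tt j.+1 by apply: ltW.
  have epsj : eps * c <= tj / 3.
    apply: le_trans epsc _; rewrite ler_pM2r //; exact: tau_decr.
  move: ht => /andP[t0 tT].
  pose a := Num.min t (T - h).
  have a0 : 0 <= a by rewrite le_min t0 subr_ge0 hT.
  have ahT : a + h <= T.
    have : a <= T - h by rewrite ge_min lexx orbT.
    lra.
  have hat : a <= t by rewrite /a ge_min lexx.
  have tah : t <= a + h.
    have [->|->] : a = t \/ a = T - h.
      by rewrite /a /Num.min; case: ifP; [left|right].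
    - lra.
    - lra.
  have H1 : forall x, x \in `]a, a + h[ -> is_derive x 1 (y k) (y k.+1 x + u x * w k x).
    move=> x; rewrite in_itv /= => /andP[ax xa]; apply: dy.
    apply/andP; split; lra.
  have H2 : {within `[a, a + h], continuous (y k)}.
    apply: (continuous_subspaceW _ (cy k)); apply: subset_itv; rewrite bnd_simp //.
  have ah : a < a + h by lra.
  have [xi hxi exi] := MVT ah H1 H2.
  move: hxi; rewrite in_itv /= => /andP[axi xia].
  have xiT : 0 <= xi <= T by apply/andP; split; lra.
  have aT : 0 <= a <= T by apply/andP; split; lra.
  have ahT' : 0 <= a + h <= T by apply/andP; split; lra.
  have b1 : `|y k.+1 xi| <= 2 * tt j.+1 * M / h + eps * (c * M).
    have -> : y k.+1 xi = (y k (a + h) - y k a) / h - u xi * w k xi.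
      rewrite exi (_ : a + h - a = h); last by ring.
      by rewrite mulfK ?gt_eqF // addrK.
    apply: le_trans (ler_normB _ _) _; apply: lerD.
      rewrite normrM (@gtr0_norm _ h^-1); last by rewrite invr_gt0.
      rewrite ler_pM2r ?invr_gt0 //.
      apply: le_trans (ler_normB _ _) _.
      have := IH' _ ahT'; have := IH' _ aT; lra.
    rewrite normrM; apply: ler_pM; [exact: normr_ge0 | exact: normr_ge0 | exact: hu xi xiT | exact: hw k xi (ltnW hk3) xiT].
  have b2 : `|y k.+1 t - y k.+1 xi| <= 2 * c * M * `|t - xi|.
    apply: (@lip (y k.+1) (fun s => y k.+2 s + u s * w k.+1 s) 0 T).
    - exact: cy.
    - move=> x; rewrite in_itv /= => /andP[x0 xT].
      have hx : 0 <= x <= T by apply/andP; split; lra.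
      apply: le_trans (ler_normD _ _) _; rewrite normrM.
      apply: ar1 (hy k.+2 x hk2 hx) (hu x hx) eps1 (hw k.+1 x hk3 hx) _.
      exact: mulr_ge0 (ltW c0) M0.
    - by rewrite in_itv /=; apply/andP; split.
    - by rewrite in_itv /=.
  have txi : `|t - xi| <= h.
    rewrite ler_norml; apply/andP; split; lra.
  have b3 : `|y k.+1 t| <= `|y k.+1 t - y k.+1 xi| + `|y k.+1 xi|.
    by rewrite -{1}(subrK (y k.+1 xi) (y k.+1 t)) ler_normD.
  apply: le_trans b3 _.
  have f1 : 2 * tt j.+1 * M / h <= tj * M / 3 := ar2 h0 M0 del.
  have f2 : 2 * c * M * `|t - xi| <= tj * M / 3 := ar3 c0 M0 (normr_ge0 _) txi htj.
  have f3 : eps * (c * M) <= tj * M / 3 := ar4 M0 epsj.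
  rewrite (_ : tt (n.-1 - k.+1)%N = tj) //.
  move: b1 b2 f1 f2 f3; clear; lra.
have fin t : 0 <= t <= T -> `|e t| <= M / 2.
  move=> ht; apply: norm_le_coord; first by lra.
  move=> i j; rewrite (ord1 j).
  have -> : e t = Oi *m (O *m e t) by rewrite mulKmx.
  rewrite mxE.
  have Oe k : (O *m e t) k 0 = y k t.
    rewrite /y !mxE; apply: eq_bigr => l _; by rewrite mxE.
  have rowK : \sum_k `|Oi i k| <= K.
    rewrite /K; apply: le_trans (_ : \sum_i0 \sum_k `|Oi i0 k| <= _); last first.
      by rewrite lerDr.
    rewrite [leRHS](bigD1 i) //=; rewrite -[X in X <= _]addr0; apply: lerD => //.
    by apply: sumr_ge0 => l _; apply: sumr_ge0.
  apply: le_trans (ler_norm_sum _ _ _) _.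
  apply: le_trans (_ : \sum_k `|Oi i k| * (tt 0 * M) <= _).
    apply: ler_sum => k _; rewrite normrM Oe ler_wpM2l //.
    apply: le_trans (main k (ltn_ord k) t ht) _.
    by rewrite ler_wpM2r //; apply: tau_decr.
  rewrite -mulr_suml.
  have e0 : tt 0 = (2 * K)^-1 by [].
  apply: le_trans (_ : K * (tt 0 * M) <= _).
    by rewrite ler_wpM2r // mulr_ge0 // ltW.
  rewrite e0 mulrA invfM mulrCA mulfV ?gt_eqF // mulr1; lra.
have MM : M <= M / 2 by apply: fin; move: tmT; rewrite in_itv.
move=> t ht; apply/eqP; rewrite -normr_le0.
apply: le_trans (hM' t ht) _; lra.
Qed.

Lemma norm_le_enorm n (x : 'cV[R]_n) : `|x| <= enorm x.
Proof.
apply: norm_le_coord; first exact: sqrtr_ge0.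
move=> i j; rewrite (ord1 j) -sqrtr_sqr /enorm; apply: ler_wsqrtr.
rewrite (bigD1 i) //= lerDl; apply: sumr_ge0 => l _; exact: sqr_ge0.
Qed.
End S.

Unset Implicit Arguments.
Theorem proposition3 (R : realType) (n m : nat) (A B : 'M[R]_n)
  (C : 'rV[R]_n) (b : 'cV[R]_n) (lam : 'cV[R]_n -> R)
  (S : set 'cV[R]_m) (L : 'cV[R]_m -> 'cV[R]_n) (f : 'cV[R]_m -> R -> 'cV[R]_m)
  (K1 : set 'cV[R]_n) :
  (0 < n)%N ->
  smooth lam -> lam 0 = 0 ->
  asymp_stable (closed_loop A B b lam) ->
  semialgebraic K1 -> compact K1 ->
  K1 `<=` dom_attraction (closed_loop A B b lam) ->
  observable_pair C A ->
  (K1^°) 0 ->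
  forall T : R, 0 < T ->
  exists Rr : R, 0 < Rr /\ eball Rr `<=` K1 /\
  exists eta1 : R, 0 < eta1 /\
  forall delta : 'cV[R]_n -> R,
    smooth delta -> delta 0 = 0 ->
    sup [set `|delta x| | x in K1] < eta1 ->
    forall (xh eps : R -> 'cV[R]_n) (xi : R -> 'cV[R]_m) (om : R -> 'cV[R]_n),
      eball Rr (xh 0) -> S (xi 0) -> sphere (om 0) ->
      CS_sol A B b C lam delta S L f T xh eps xi om ->
      (forall t, 0 <= t <= T -> eball Rr (xh t)) ->
      observable_in_time A B b C (fun t => lam (xh t) + delta (xh t)) T.
Proof.
move=> n0 slam lam0 _ _ cK1 _ obs int0 T T0.
have [ep ep0 Hcore] := @core R n A B C T T0 obs.
have [r r0 Hr] : exists2 r : R, 0 < r & forall x : 'cV[R]_n, `|x| < r -> K1 x.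
  move: int0; rewrite /interior => /nbhs_ballP[r r0 Hr].
  exists r => // x hx; apply: Hr; rewrite -ball_normE /ball_ /= sub0r normrN //.
have [r2 r20 Hr2] : exists2 r2 : R, 0 < r2 &
    forall x : 'cV[R]_n, `|x| < r2 -> `|lam x| < ep / 2.
  have := (slam [::]).1 0; move=> /cvgrPdist_lt /(_ (ep / 2)).
  have ep2 : 0 < ep / 2 by rewrite divr_gt0.
  move=> /(_ ep2) /nbhs_ballP[r2 r20 Hr2].
  exists r2 => // x hx.
  have := Hr2 x; rewrite -ball_normE /ball_ /= sub0r normrN => /(_ hx).
  by rewrite lam0 sub0r normrN.
exists (Num.min r r2); split; first by rewrite lt_min r0 r20.
split.
  move=> x; rewrite /eball /= => hx; apply: Hr.
  apply: le_lt_trans (norm_le_enorm x) (lt_le_trans hx _).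
  by rewrite ge_min lexx.
exists (ep / 2); split; first by rewrite divr_gt0.
move=> delta sdelta d0 hsup xh eps xi om _ _ _ CS hball.
have K10 : K1 0 by apply: Hr; rewrite normr0.
have cdelta : continuous delta := (sdelta [::]).1.
have hub : forall x, K1 x -> `|delta x| < ep / 2.
  move=> x Kx; apply: le_lt_trans hsup.
  have [c0 _ Hc0] := @compact_EVT_max _ R (fun x => `|delta x|) K1
    (ex_intro _ 0 K10) cK1
    (continuous_subspaceT (fun x => continuous_comp (cdelta x) (@norm_continuous _ _ (delta x)))).
  apply: (ub_le_sup (E := [set `|delta x| | x in K1])).
    exists `|delta c0| => _ [z Kz <-]; apply: Hc0; by rewrite inE.
  by exists x.
move=> x1 x2 [c1 d1] [c2 d2] hC t ht.
apply/eqP; rewrite -subr_eq0; apply/eqP.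
apply: (Hcore (fun t => lam (xh t) + delta (xh t)) (fun s => x1 s - x2 s)) => //.
- move=> s hs; have := hball s hs; rewrite /eball /= => hx.
  have hxr : `|xh s| < Num.min r r2 := le_lt_trans (norm_le_enorm _) hx.
  have K1x : K1 (xh s) by apply: Hr; apply: lt_le_trans hxr _; rewrite ge_min lexx.
  have l1 : `|lam (xh s)| < ep / 2.
    by apply: Hr2; apply: lt_le_trans hxr _; rewrite ge_min lexx orbT.
  have l2 := hub _ K1x.
  apply: le_trans (ler_normD _ _) _; lra.
- move=> s; exact: (continuousB (c1 s) (c2 s)).
- move=> s hs; have [dx1 D1] := d1 s hs; have [dx2 D2] := d2 s hs.
  split; first exact: derivableB.
  rewrite (deriveB dx1 dx2) D1 D2 mulmxBr opprD addrACA subrr addr0 //.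
- by move=> s hs; rewrite mulmxBr hC // subrr.
Qed.
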